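(* For every integer $d\ge2$ with $d \notin \{2\} \cup 4\mathbb N$, we have $J_d/d \in \mathsf O_{d,2} \setminus \mathsf O_{d,1}$, where $J_d$ is the $d\times d$ all-ones matrix.
   Context: For integers $d\ge2$, $s\ge1$ and $U\in M_{ds}(\mathbb C)$ viewed as a $d\times d$ block matrix with blocks $U_{ij}\in M_s(\mathbb C)$, set $\phi_{d,s}(U)=\big(\tfrac1s\|U_{ij}\|_F^2\big)_{i,j=1}^d$ with $\|X\|_F=\operatorname{Tr}(XX^* )^{1/2}$. Define $\mathsf O_{d,s}:=\phi_{d,s}(\mathcal O(ds))$, where $\mathcal O(n)$ is the group of $n\times n$ real orthogonal matrices. $4\mathbb N$ denotes the positive multiples of $4$. *)

(* Defs.v *)
From HB Require Import structures.
From mathcomp Require Import all_boot all_order all_algebra.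
From mathcomp Require Import reals.
Set Implicit Arguments. Unset Strict Implicit. Unset Printing Implicit Defensive.
Import Order.TTheory GRing.Theory Num.Theory.
Local Open Scope ring_scope.

Definition orthogonal_mx (R : realType) (n : nat) (U : 'M[R]_n) : Prop :=
  U *m U^T = 1%:M.

Lemma block_idx_proof (d s : nat) (i : 'I_d) (a : 'I_s) : (i * s + a < d * s)%N.
Proof.
case: i => i /= Hi; case: a => a /= Ha.
apply: (@leq_trans ((i.+1) * s)); first by rewrite mulSn addnC ltn_add2r.
by rewrite leq_mul2r Hi orbT.
Qed.

(* Global index of entry a of block i in a d x d block matrix with s x s blocks. *)
Definition block_idx (d s : nat) (i : 'I_d) (a : 'I_s) : 'I_(d * s) :=
  Ordinal (block_idx_proof i a).

(* phi_{d,s}(U)_{ij} = (1/s) ||U_{ij}||_F^2; for real U, ||X||_F^2 is the sum of squares. *)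
Definition phi_ds (R : realType) (d s : nat) (U : 'M[R]_(d * s)) : 'M[R]_d :=
  \matrix_(i < d, j < d)
    (s%:R^-1 * \sum_(a < s) \sum_(b < s) (U (block_idx i a) (block_idx j b)) ^+ 2).

Definition in_O_ds (R : realType) (d s : nat) (M : 'M[R]_d) : Prop :=
  exists U : 'M[R]_(d * s), orthogonal_mx U /\ phi_ds U = M.

Definition Jd_over_d (R : realType) (d : nat) : 'M[R]_d := const_mx (d%:R^-1).

(* Main.v *)
Require Import Defs.
From HB Require Import structures.
From mathcomp Require Import all_boot all_order all_algebra reals trigo.
From mathcomp Require Import ring lra zify.
Set Implicit Arguments. Unset Strict Implicit. Unset Printing Implicit Defensive.
Import Order.TTheory GRing.Theory Num.Theory.
Local Open Scope ring_scope.

Section P1.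
Variable R : realType.

Definition E (a b : nat) (t : R) : R :=
  if a == b then cos t else if a == 1%N then sin t else - sin t.

Lemma E_prod a a' X Y : (a < 2)%N -> (a' < 2)%N ->
  E a 0 X * E a' 0 Y + E a 1 X * E a' 1 Y = E a a' (X - Y).
Proof.
case: a => [|[|//]]; case: a' => [|[|//]] _ _;
rewrite /E /= ?cosD ?sinD ?cosN ?sinN; ring.
Qed.

Lemma term (r : R) a a' X Y : (a < 2)%N -> (a' < 2)%N ->
  r * E a 0 X * (r * E a' 0 Y) + r * E a 1 X * (r * E a' 1 Y) = r ^+ 2 * E a a' (X - Y).
Proof. move=> ha ha'; rewrite -E_prod //; ring. Qed.

Lemma E_sq_sum t : E 0 0 t ^+ 2 + E 0 1 t ^+ 2 + (E 1 0 t ^+ 2 + E 1 1 t ^+ 2) = 2.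
Proof.
rewrite /E /=. have := cos2Dsin2 t. move=> h.
have -> : 2 = 1 + 1 :> R by [].
rewrite -h; ring.
Qed.

Lemma sin_per_nat y (j : nat) : sin (y + j%:R * (pi *+ 2)) = sin y :> R.
Proof.
elim: j => [|j IH]; first by rewrite mul0r addr0.
by rewrite mulrSr mulrDl mul1r addrA sinD2pi IH.
Qed.

Lemma sin_per_diff y (j j' : nat) : sin (y + (j%:R - j'%:R) * (pi *+ 2)) = sin y :> R.
Proof.
rewrite mulrBl.
have -> : y + (j%:R * (pi *+ 2) - j'%:R * (pi *+ 2)) =
  (y - j'%:R * (pi *+ 2)) + j%:R * (pi *+ 2) by ring.
rewrite sin_per_nat.
by rewrite -[in RHS](subrK (j'%:R * (pi *+ 2)) y) sin_per_nat.
Qed.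

Lemma sum_cos0 (phi : R) n : sin (phi / 2) != 0 ->
  (forall y, sin (n%:R * phi + y) = sin y) ->
  forall psi, \sum_(k < n) cos (k%:R * phi + psi) = 0.
Proof.
move=> s0 per psi.
pose F k := sin (k%:R * phi + psi - phi / 2).
have tel : forall k, 2 * sin (phi / 2) * cos (k%:R * phi + psi) = F k.+1 - F k.
  move=> k; rewrite /F.
  have -> : k.+1%:R * phi + psi - phi / 2 = (k%:R * phi + psi) + phi / 2.
    by rewrite mulrSr; field.
  set B := k%:R * phi + psi; rewrite !sinD sinN cosN; ring.
have : 2 * sin (phi / 2) * \sum_(k < n) cos (k%:R * phi + psi) = F n - F 0.
  rewrite mulr_sumr.
  under eq_bigr do rewrite tel.
  by rewrite -(big_mkord xpredT (fun k => F k.+1 - F k)) telescope_sumr.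
have -> : F n - F 0 = 0.
  by rewrite /F -addrA per mul0r add0r subrr.
move/eqP; rewrite mulf_eq0 mulf_eq0 (negbTE s0) orbF => /orP [|/eqP //].
by rewrite pnatr_eq0.
Qed.


Lemma sum_pairs (G : nat -> R) n :
  \sum_(q < n * 2) G q = \sum_(k < n) (G (k * 2)%N + G (k * 2).+1).
Proof.
rewrite -(big_mkord xpredT G) -(big_mkord xpredT (fun k => G (k * 2)%N + G (k * 2).+1)).
elim: n => [|n IH]; first by rewrite !big_geq.
have -> : (n.+1 * 2 = (n * 2).+2)%N by lia.
by rewrite !big_nat_recr //= IH addrA.
Qed.

Lemma idx0 k : ((k * 2) %/ 2 = k /\ (k * 2) %% 2 = 0)%N.
Proof. split; lia. Qed.
Lemma idx1 k : ((k * 2).+1 %/ 2 = k /\ (k * 2).+1 %% 2 = 1)%N.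
Proof. split; lia. Qed.
Lemma idxa k (a : 'I_2) : ((k * 2 + a) %/ 2 = k /\ (k * 2 + a) %% 2 = a)%N.
Proof. have := ltn_ord a; split; lia. Qed.

Lemma sums_zero (phi : R) n : sin (phi / 2) != 0 ->
  (forall y, sin (n%:R * phi + y) = sin y) ->
  \sum_(k < n) cos (k%:R * phi) = 0 /\ \sum_(k < n) sin (k%:R * phi) = 0.
Proof.
move=> s0 per; split.
  rewrite -[RHS](sum_cos0 s0 per 0); apply: eq_bigr => k _; by rewrite addr0.
rewrite -[RHS]oppr0 -[in RHS](sum_cos0 s0 per (pi / 2)) -sumrN.
by apply: eq_bigr => k _; rewrite cosDpihalf opprK.
Qed.

Lemma sin_nz (j j' d : nat) : (j < d)%N -> (j' < d)%N -> j != j' ->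
  sin ((j%:R - j'%:R) / d%:R * pi) != 0 :> R.
Proof.
move=> hj hj' nj.
have key : forall a b : nat, (a < d)%N -> (b < a)%N ->
    0 < sin ((a%:R - b%:R) / d%:R * pi) :> R.
  move=> a b ha hb; apply: sin_gt0_pi.
  have dp : 0 < (d%:R : R) by rewrite ltr0n; lia.
  have hab : 0 < (a%:R - b%:R : R) by rewrite subr_gt0 ltr_nat.
  have hab' : (a%:R - b%:R : R) < d%:R.
    have : (a%:R : R) < d%:R by rewrite ltr_nat.
    have : 0 <= (b%:R : R) by [].
    lra.
  have t0 : 0 < (a%:R - b%:R) / d%:R :> R by rewrite divr_gt0.
  have t1 : (a%:R - b%:R) / d%:R < 1 :> R by rewrite ltr_pdivrMr // mul1r.
  have := pi_gt0 R.
  move=> pp; apply/andP; split; first by rewrite mulr_gt0.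
  by rewrite -[X in _ < X]mul1r ltr_pM2r.
case: (ltngtP j j') => h.
- have -> : (j%:R - j'%:R) / d%:R * pi = - ((j'%:R - j%:R) / d%:R * pi) :> R.
    by rewrite -!mulNr opprB.
  by rewrite sinN oppr_eq0 gt_eqF // key.
- by rewrite gt_eqF // key.
- by move: nj; rewrite h eqxx.
Qed.

Lemma in_O2 d : (0 < d)%N -> in_O_ds 2 (Jd_over_d R d).
Proof.
move=> d0.
pose th : R := pi *+ 2 / d%:R.
pose r := Num.sqrt (d%:R^-1 : R).
have dpos : 0 < (d%:R : R) by rewrite ltr0n.
have r2 : r ^+ 2 = d%:R^-1 by rewrite sqr_sqrtr // invr_ge0 ltW.
pose Uf (p q : nat) := r * E (p %% 2) (q %% 2) ((p %/ 2)%:R * (q %/ 2)%:R * th).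
exists (\matrix_(p, q) Uf p q : 'M[R]_(d * 2)); split.
- rewrite /orthogonal_mx; apply/matrixP => p p'; rewrite !mxE.
  under eq_bigr do rewrite !mxE.
  rewrite (sum_pairs (fun q => Uf p q * Uf p' q)).
  have ha : (p %% 2 < 2)%N by rewrite ltn_mod.
  have ha' : (p' %% 2 < 2)%N by rewrite ltn_mod.
  under eq_bigr => k _ do rewrite /Uf (proj1 (idx0 k)) (proj2 (idx0 k))
     (proj1 (idx1 k)) (proj2 (idx1 k)) term //.
  rewrite -mulr_sumr.
  have hj : (p %/ 2 < d)%N by have := ltn_ord p; lia.
  have hj' : (p' %/ 2 < d)%N by have := ltn_ord p'; lia.
  have [ejj|njj] := eqVneq (p %/ 2)%N (p' %/ 2)%N.
  + rewrite ejj; under eq_bigr do rewrite subrr.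
    rewrite sumr_const card_ord.
    have pp : (p == p') = ((p %% 2)%N == (p' %% 2)%N).
      apply/eqP/eqP => [->//|em]; apply: val_inj.
      by rewrite /= (divn_eq p 2) (divn_eq p' 2) ejj em.
    rewrite pp /E; case: eqP => _; first by rewrite cos0 r2 mulVf // gt_eqF.
    by case: ifP => _; rewrite sin0 ?oppr0 mul0rn mulr0.
  + have pp : (p == p') = false.
      by apply/negbTE; apply: contra njj => /eqP ->.
    rewrite pp.
    pose phi := ((p %/ 2)%:R - (p' %/ 2)%:R) * th.
    have eqX : forall k : nat, (p %/ 2)%:R * k%:R * th - (p' %/ 2)%:R * k%:R * th = k%:R * phi.
      by move=> k; rewrite /phi; ring.
    under eq_bigr do rewrite eqX.
    have s0 : sin (phi / 2) != 0.
      have -> : phi / 2 = ((p %/ 2)%:R - (p' %/ 2)%:R) / d%:R * pi.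
        rewrite /phi /th -[pi *+ 2]mulr_natr; field; by rewrite gt_eqF.
      exact: sin_nz.
    have per : forall y, sin (d%:R * phi + y) = sin y.
      move=> y; have -> : d%:R * phi = ((p %/ 2)%:R - (p' %/ 2)%:R) * (pi *+ 2).
        rewrite /phi /th -!(mulr_natr pi); field; by rewrite gt_eqF.
      by rewrite addrC sin_per_diff.
    have [hc hs] := sums_zero s0 per.
    rewrite /E; case: eqP => _; first by rewrite hc mulr0.
    case: eqP => _; first by rewrite hs mulr0.
    by rewrite sumrN hs oppr0 mulr0.
- apply/matrixP => i j; rewrite !mxE.
  under eq_bigr do under eq_bigr do rewrite mxE /= /Uf (proj1 (idxa _ _)) (proj2 (idxa _ _))
     (proj1 (idxa j _)) (proj2 (idxa j _)).
  rewrite !big_ord_recl !big_ord0 /= !addr0.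
  rewrite /bump /= !exprMn -!mulrDr E_sq_sum r2; field; by rewrite gt_eqF.
Qed.

End P1.
Lemma sgz_key (R : realType) (c v : R) : 0 < c ->
  (v = 0 \/ v = 4 * c ^+ 2 \/ v = - (4 * c ^+ 2)) -> v = 4 * c ^+ 2 * (sgz v)%:~R.
Proof.
move=> c0; have h : 0 < 4 * c ^+ 2 by rewrite mulr_gt0 ?exprn_gt0.
case=> [->|[->|->]]; first by rewrite sgz0 mulr0.
  by rewrite gtr0_sgz // mulr1.
by rewrite ltr0_sgz ?oppr_lt0 // mulrN1.
Qed.

Theorem not_O1 (R : realType) (d : nat) : (3 <= d)%N -> ~~ (4 %| d)%N ->
  ~ in_O_ds 1 (Jd_over_d R d).
Proof.
move=> d3 nd [U [oU phiU]].
have entry : forall p q : 'I_(d*1), U p q ^+ 2 = d%:R^-1.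
  move=> p q.
  have hp : (p < d)%N by have := ltn_ord p; rewrite [X in (_ < X)%N]muln1.
  have hq : (q < d)%N by have := ltn_ord q; rewrite [X in (_ < X)%N]muln1.
  have := congr1 (fun M : 'M[R]_d => M (Ordinal hp) (Ordinal hq)) phiU.
  rewrite /phi_ds /Jd_over_d !mxE !big_ord1 invr1 mul1r.
  have -> : block_idx (Ordinal hp) ord0 = p by apply: val_inj => /=; rewrite muln1 addn0.
  by have -> : block_idx (Ordinal hq) ord0 = q by apply: val_inj => /=; rewrite muln1 addn0.
have orth : forall p q : 'I_(d*1), \sum_k U p k * U q k = (p == q)%:R.
  move=> p q; have := congr1 (fun M : 'M[R]_(d*1) => M p q) oU; rewrite !mxE => <-.
  by apply: eq_bigr => k _; rewrite mxE.
have h0 : (0 < d*1)%N by rewrite muln1; lia.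
have h1 : (1 < d*1)%N by rewrite muln1; lia.
have h2 : (2 < d*1)%N by rewrite muln1; lia.
pose p0 := Ordinal h0; pose p1 := Ordinal h1; pose p2 := Ordinal h2.
pose c := Num.sqrt (d%:R^-1 : R).
have dpos : 0 < (d%:R : R) by rewrite ltr0n; lia.
have c0 : 0 < c by rewrite sqrtr_gt0 invr_gt0.
have c2 : c ^+ 2 = d%:R^-1 by rewrite sqr_sqrtr // invr_ge0 ltW.
have sq : forall p q, U p q = c \/ U p q = - c.
  move=> p q; have : U p q ^+ 2 == c ^+ 2 by rewrite c2 entry.
  by rewrite eqf_sqr => /orP [/eqP ->|/eqP ->]; [left|right].
pose m k := sgz ((U p0 k + U p1 k) * (U p0 k + U p2 k)).
have key : forall k, (U p0 k + U p1 k) * (U p0 k + U p2 k) = 4 * c ^+ 2 * (m k)%:~R.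
  move=> k; apply: sgz_key => //.
  case: (sq p0 k) => ->; case: (sq p1 k) => ->; case: (sq p2 k) => ->;
  by [left; ring | right; left; ring | right; right; ring].
have hsum : \sum_k (U p0 k + U p1 k) * (U p0 k + U p2 k) = 1.
  have -> : \sum_k (U p0 k + U p1 k) * (U p0 k + U p2 k) =
     \sum_k U p0 k * U p0 k + \sum_k U p0 k * U p2 k + \sum_k U p1 k * U p0 k
     + \sum_k U p1 k * U p2 k.
    rewrite -!big_split /=; apply: eq_bigr => k _; ring.
  by rewrite !orth !eqxx /= addr0 addr0 addr0.
have : (d%:R : R) = ((4 * \sum_k m k)%R)%:~R.
  move: hsum; under eq_bigr do rewrite key.
  rewrite -mulr_sumr c2 => h.
  rewrite rmorphM rmorph_sum /=.
  have -> : (4 : int)%:~R = 4 :> R by [].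
  set S := \sum_(i < d*1) (m i)%:~R in h *.
  have e : (d%:R:R) = d%:R * (4 / d%:R * S) by rewrite h mulr1.
  rewrite {1}e; field; by rewrite gt_eqF.
have -> : (d%:R : R) = (d%:Z)%:~R by [].
move/intr_inj => hd.
have : (4 %| `|d%:Z|)%N by rewrite hd abszM dvdn_mulr.
by rewrite absz_nat (negbTE nd).
Qed.

Theorem corollary4p3 (R : realType) (d : nat) :
  (2 <= d)%N -> d <> 2%N -> ~~ (4 %| d)%N ->
  in_O_ds 2 (Jd_over_d R d) /\ ~ in_O_ds 1 (Jd_over_d R d).
Proof.
move=> d2 dn2 nd; split.
  by apply: in_O2; lia.
apply: not_O1 => //; lia.
Qed.
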